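(* Let $d\ge0$, let $x\in V_d$ and $n:=\mathrm{min.deg}\,x$. Then: (1) There exists $\xi\in\mathfrak g_d^x$ with $\mathrm{min.deg}\,\xi=0$. (2) For any such $\xi$, $$\mathfrak g_d^x=\mathbb C[z]\xi+z^{d+1-n}\mathfrak g_d=\mathbb C\xi\oplus\mathbb C\xi z\oplus\cdots\oplus\mathbb C\xi z^{d-n}\oplus\mathfrak{sl}_2z^{d+1-n}\oplus\cdots\oplus\mathfrak{sl}_2z^d.$$ (3) For $s=2(d+1-n')$ with $n'=0,1,\dots,d+1$, $$(V_d)_{(s)}=\{x'\in V_d:\mathrm{min.deg}\,x'=n'\}=(T\setminus0)z^{n'}\oplus Tz^{n'+1}\oplus\cdots\oplus Tz^d,$$ and for all other values of $s$, $(V_d)_{(s)}=\emptyset$. In particular $\mathrm{mod}(\mathfrak g_d:V_d)=0$, and this value is attained by every nonempty $(V_d)_{(s)}$.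
   Context: $T=\mathbb C^2=\mathbb C\langle e_1,e_2\rangle$ with the standard symplectic form and the standard action of $\mathfrak{sl}_2=\mathfrak{sl}(T)$. $V_d=T\otimes\mathbb C[z]/(z^{d+1})$ and $\mathfrak g_d=\mathfrak{sl}_2\otimes\mathbb C[z]/(z^{d+1})$ (truncated current algebra), acting on $V_d$ by $(\xi z^a)(vz^b)=(\xi v)z^{a+b}$. For $x=x_0+x_1z+\cdots+x_dz^d$ in $V_d$ or $\mathfrak g_d$, $\mathrm{min.deg}\,x=\min\{m:x_m\ne0\}$, with $\mathrm{min.deg}\,0=d+1$. $\mathfrak g_d^x$ is the stabilizer of $x$ in $\mathfrak g_d$. $(V_d)_{(s)}$ is the set of $x\in V_d$ whose orbit under $\mathfrak g_d$ (equivalently under its adjoint group) has dimension $s$, i.e. $\dim\mathfrak g_d.x=s$. The modality is $\mathrm{mod}(\mathfrak g_d:V_d)=\max_{s\ge0}(\dim(V_d)_{(s)}-s)$. *)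

(* Defs.v *)
From HB Require Import structures.
From mathcomp Require Import all_boot all_order all_algebra.
From mathcomp Require Import mpoly.
Set Implicit Arguments. Unset Strict Implicit. Unset Printing Implicit Defensive.
Import Order.TTheory GRing.Theory Num.Theory.
Local Open Scope ring_scope.

Section Defs.
Variable C : numClosedFieldType.
Variable d : nat.

(* V_d = T (x) C[z]/(z^{d+1}) : x m = x_m, the coefficient of z^m, in T = C^2 *)
Definition Vd := {ffun 'I_d.+1 -> 'cV[C]_2}.
(* the ambient space of g_d : families (xi_0,...,xi_d) of 2x2 matrices;
   g_d itself is the subspace of families of traceless matrices *)
Definition Gd := {ffun 'I_d.+1 -> 'M[C]_2}.

Definition in_gd (xi : Gd) : bool := [forall m, \tr (xi m) == 0].

(* min.deg, with min.deg 0 = d+1 *)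
Definition mindeg (V : nmodType) (f : {ffun 'I_d.+1 -> V}) : nat :=
  \big[minn/d.+1]_(m < d.+1 | f m != 0) (m : nat).

(* the action (xi z^a)(v z^b) = (xi v) z^(a+b), truncated *)
Definition act (xi : Gd) (x : Vd) : Vd :=
  [ffun m : 'I_d.+1 =>
     \sum_(a < d.+1) \sum_(b < d.+1 | (a + b)%N == (m : nat)) xi a *m x b].

(* multiplication by z^k in g_d *)
Definition zsh (k : nat) (xi : Gd) : Gd :=
  [ffun m : 'I_d.+1 => if (k <= m)%N then xi (inord (m - k)) else 0].

Definition trmap (xi : Gd) : {ffun 'I_d.+1 -> C^o} := [ffun m => \tr (xi m)].
Definition gd_space : {vspace Gd} := lker (linfun trmap).

Definition orbit_space (x : Vd) : {vspace Vd} :=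
  (linfun (fun xi : Gd => act xi x) @: gd_space)%VS.
Definition orbit_dim (x : Vd) : nat := \dim (orbit_space x).

Definition Vstratum (s : nat) : pred Vd := fun x => orbit_dim x == s.

Definition coordV (x : Vd) : 'I_(2 * d.+1) -> C :=
  fun i => x (inord (i %/ 2)) (inord (i %% 2)) 0.

(* the coordinates in J are algebraically independent on S, i.e. the
   projection of S to C^J is Zariski dense *)
Definition alg_indep_on (S : pred Vd) (J : {set 'I_(2 * d.+1)}) : Prop :=
  forall p : {mpoly C[2 * d.+1]},
    (forall m, m \in msupp p -> forall i, i \notin J -> m i = 0%N) ->
    (forall x, S x -> p.@[coordV x] = 0) -> p = 0.

(* S has (algebraic) dimension k: dimension of its Zariski closure, computed as
   the maximal number of coordinates algebraically independent on S
   (Noether normalization).  The empty set has no dimension (= -oo). *)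
Definition has_dim (S : pred Vd) (k : nat) : Prop :=
  (exists J, alg_indep_on S J /\ #|J| = k) /\
  (forall J, alg_indep_on S J -> (#|J| <= k)%N).

(* mod(g_d : V_d) = m, i.e. m = max_s (dim (V_d)_(s) - s), empty strata
   contributing -oo *)
Definition modality_is (m : int) : Prop :=
  (forall s k, has_dim (Vstratum s) k -> (k%:Z - s%:Z <= m)%R) /\
  (exists s k, has_dim (Vstratum s) k /\ k%:Z - s%:Z = m).

End Defs.

(* Main.v *)
Require Import Defs.
From HB Require Import structures.
From mathcomp Require Import all_boot all_order all_algebra.
From mathcomp Require Import mpoly.
From mathcomp Require Import ring zify.
From Stdlib Require Import Classical.
Import Order.TTheory GRing.Theory Num.Theory.
Set Implicit Arguments. Unset Strict Implicit. Unset Printing Implicit Defensive.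
Local Open Scope ring_scope.
Section S.
Variable C : numClosedFieldType.

Lemma l01 : lift ord0 (ord0 : 'I_1) = 1 :> 'I_2. Proof. by apply/val_inj. Qed.
Lemma o0 : ord0 = 0 :> 'I_2. Proof. by apply/val_inj. Qed.
Lemma mul2E (M : 'M[C]_2) (v : 'cV[C]_2) i : (M *m v) i 0 = M i 0 * v 0 0 + M i 1 * v 1 0.
Proof. by rewrite mxE !big_ord_recl big_ord0 addr0 l01 o0. Qed.

Lemma tr2E (M : 'M[C]_2) : \tr M = M 0 0 + M 1 1.
Proof. by rewrite /mxtrace !big_ord_recl big_ord0 addr0 l01 o0. Qed.

Lemma ord2P (i : 'I_2) : i = 0 \/ i = 1.
Proof. by case: i => [[|[|]]] //= H; [left|right]; apply/val_inj. Qed.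

Lemma mx2P (A B : 'M[C]_2) : A 0 0 = B 0 0 -> A 0 1 = B 0 1 -> A 1 0 = B 1 0 -> A 1 1 = B 1 1 -> A = B.
Proof.
move=> h1 h2 h3 h4; apply/matrixP=> i j.
by case: (ord2P i) => ->; case: (ord2P j) => ->.
Qed.

Lemma cv2P (A B : 'cV[C]_2) : A 0 0 = B 0 0 -> A 1 0 = B 1 0 -> A = B.
Proof.
move=> h1 h2; apply/matrixP=> i j; rewrite (ord1 j).
by case: (ord2P i) => ->.
Qed.

Lemma scal2E l (M : 'M[C]_2) i j : (l *: M) i j = l * M i j. Proof. by rewrite mxE. Qed.

Definition mk2 (a b c e : C) : 'M[C]_2 :=
  \matrix_(i < 2, j < 2) (if i == 0 then (if j == 0 then a else b) else (if j == 0 then c else e)).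

Lemma mk2E a b c e : let M := mk2 a b c e in
  [/\ M 0 0 = a, M 0 1 = b, M 1 0 = c & M 1 1 = e].
Proof. by rewrite /mk2 !mxE. Qed.

Definition Nv (v : 'cV[C]_2) := mk2 (v 0 0 * v 1 0) (- v 0 0 ^+ 2) (v 1 0 ^+ 2) (- (v 0 0 * v 1 0)).

Lemma cv2_neq0 (v : 'cV[C]_2) : v != 0 -> v 0 0 != 0 \/ v 1 0 != 0.
Proof.
move=> nz; case: (eqVneq (v 0 0) 0) => h1; last by left.
case: (eqVneq (v 1 0) 0) => h2; last by right.
by case/eqP: nz; apply: cv2P; rewrite mxE.
Qed.

Lemma Nv_props v : v != 0 -> [/\ \tr (Nv v) = 0, Nv v *m v = 0 & Nv v != 0].
Proof.
move=> nz; have [e1 e2 e3 e4] := mk2E (v 0 0 * v 1 0) (- v 0 0 ^+ 2) (v 1 0 ^+ 2) (- (v 0 0 * v 1 0)).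
split.
- by rewrite tr2E /Nv e1 e4 subrr.
- apply: cv2P; rewrite !mul2E /Nv ?e1 ?e2 ?e3 ?e4 mxE; ring.
- case: (cv2_neq0 nz) => h; apply/eqP => /matrixP.
  + move=> /(_ 0 1); rewrite e2 mxE => /eqP; rewrite oppr_eq0 expf_eq0 /=.
    by rewrite (negPf h).
  + move=> /(_ 1 0); rewrite e3 mxE => /eqP; rewrite expf_eq0 /=.
    by rewrite (negPf h).
Qed.

Lemma stab_line v (A : 'M[C]_2) : v != 0 -> \tr A = 0 -> A *m v = 0 ->
  exists l, A = l *: Nv v.
Proof.
move=> nz tA Av.
have [e1 e2 e3 e4] := mk2E (v 0 0 * v 1 0) (- v 0 0 ^+ 2) (v 1 0 ^+ 2) (- (v 0 0 * v 1 0)).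
have q1 : A 0 0 * v 0 0 + A 0 1 * v 1 0 = 0 by rewrite -mul2E Av mxE.
have q2 : A 1 0 * v 0 0 + A 1 1 * v 1 0 = 0 by rewrite -mul2E Av mxE.
have q3 : A 1 1 = - A 0 0 by apply/eqP; rewrite -subr_eq0 opprK addrC -tr2E tA.
rewrite q3 in q2.
case: (eqVneq (v 0 0) 0) => h; last first.
- exists (- A 0 1 / v 0 0 ^+ 2).
  have a0 : A 0 0 = - (A 0 1 * v 1 0) / v 0 0.
    by apply: (mulIf h); rewrite mulrVK ?unitfE //; apply/eqP; rewrite -addr_eq0 q1.
  have a2 : A 1 0 = A 0 0 * v 1 0 / v 0 0.
    apply: (mulIf h); rewrite mulrVK ?unitfE //; apply/eqP.
    by rewrite -subr_eq0 -mulNr q2.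
  apply: mx2P; rewrite !scal2E /Nv ?e1 ?e2 ?e3 ?e4 ?q3 ?a2 ?a0; field; exact: h.
- have h1 : v 1 0 != 0 by case: (cv2_neq0 nz) => //; rewrite h eqxx.
  rewrite h mulr0 add0r in q1; rewrite h mulr0 add0r mulNr in q2.
  move/eqP: q1; rewrite mulf_eq0 (negPf h1) orbF => /eqP a1.
  move/eqP: q2; rewrite oppr_eq0 mulf_eq0 (negPf h1) orbF => /eqP a0.
  exists (A 1 0 / v 1 0 ^+ 2).
  apply: mx2P; rewrite !scal2E /Nv ?e1 ?e2 ?e3 ?e4 ?q3 ?a0 ?a1 ?h; field; exact: h1.
Qed.
Lemma sl2_surj (v u : 'cV[C]_2) : v != 0 -> exists M : 'M[C]_2, \tr M = 0 /\ M *m v = u.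
Proof.
move=> nz; case: (eqVneq (v 0 0) 0) => h; last first.
- set a := u 0 0 / v 0 0; set c := (u 1 0 + u 0 0 * v 1 0 / v 0 0) / v 0 0.
  have [e1 e2 e3 e4] := mk2E a 0 c (- a).
  exists (mk2 a 0 c (- a)); split; first by rewrite tr2E e1 e4 subrr.
  apply: cv2P; rewrite !mul2E ?e1 ?e2 ?e3 ?e4 /a /c; field; exact: h.
- have h1 : v 1 0 != 0 by case: (cv2_neq0 nz) => //; rewrite h eqxx.
  set a := - (u 1 0 / v 1 0); set b := u 0 0 / v 1 0.
  have [e1 e2 e3 e4] := mk2E a b 0 (- a).
  exists (mk2 a b 0 (- a)); split; first by rewrite tr2E e1 e4 subrr.
  apply: cv2P; rewrite !mul2E ?e1 ?e2 ?e3 ?e4 /a /b h; field; exact: h1.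
Qed.
End S.

Section T.
Variable C : numClosedFieldType.
Variable d : nat.
Local Notation Vd := (Vd C d).
Local Notation Gd := (Gd C d).

Lemma linfunE' (aT rT : vectType C) (f : aT -> rT) : linear f -> forall v, linfun f v = f v.
Proof.
move=> lf v; pose fL : {linear _ -> _} := HB.pack f (GRing.isLinear.Build _ _ _ _ f lf).
exact: (lfunE fL).
Qed.

Definition lowz (V : nmodType) (f : {ffun 'I_d.+1 -> V}) (j : nat) :=
  forall m : 'I_d.+1, (m < j)%N -> f m = 0.

Section Mindeg.
Variable V : nmodType.
Implicit Types f : {ffun 'I_d.+1 -> V}.

Lemma mindeg_le f : (mindeg f <= d.+1)%N.
Proof.
rewrite /mindeg; apply: (big_ind (fun v => (v <= d.+1)%N)) => //.
- by move=> a b ha hb; rewrite geq_min ha.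
- by move=> m _; apply: ltnW.
Qed.

Lemma mindeg_geP f j : (j <= d.+1)%N -> (j <= mindeg f)%N <-> lowz f j.
Proof.
move=> jd; split.
- move=> hj m mj; apply/eqP; apply/negPn/negP => fm.
  have : (mindeg f <= m)%N.
    rewrite /mindeg; have : m \in index_enum 'I_d.+1 by rewrite mem_index_enum.
    elim: (index_enum _) => // a r IH; rewrite in_cons big_cons.
    case/orP => [/eqP <-|mr]; first by rewrite fm geq_minl.
    by case: ifP => _; [rewrite geq_min IH // orbT | exact: IH].
  lia.
- move=> hl; rewrite /mindeg; apply: (big_ind (fun v => (j <= v)%N)) => //.
  + by move=> a b ha hb; rewrite leq_min ha hb.
  + move=> m fm; rewrite leqNgt; apply/negP => mj.
    by rewrite hl // eqxx in fm.
Qed.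

Lemma mindeg_att f : (mindeg f <= d)%N -> f (inord (mindeg f)) != 0.
Proof.
move=> hd; apply/negP => /eqP h0.
have : lowz f (mindeg f).+1.
  move=> m mj; case: (ltngtP m (mindeg f)) => [lt||eq].
  - by apply: (proj1 (mindeg_geP f (mindeg_le f))).
  - lia.
  - by rewrite -h0; congr (f _); apply/val_inj; rewrite /= inordK //; lia.
move/(mindeg_geP f (j := (mindeg f).+1)) => H; have := H ltac:(lia); lia.
Qed.

Lemma mindeg_char f n' : (n' <= d.+1)%N -> mindeg f = n' <->
  lowz f n' /\ (forall m : 'I_d.+1, (m : nat) = n' -> f m != 0).
Proof.
move=> hn; split.
- move=> <-; split; first by apply/(mindeg_geP f (mindeg_le f)).
  move=> m hm; have hd : (mindeg f <= d)%N by have := ltn_ord m; lia.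
  have := mindeg_att hd; congr (f _ != 0); apply/val_inj; rewrite /= inordK; lia.
- move=> [hl hne]; have h1 : (n' <= mindeg f)%N by apply/(mindeg_geP f hn).
  case: (ltnP n' d.+1) => hd; last first.
    by have := mindeg_le f; lia.
  apply/eqP; rewrite eqn_leq h1 andbT leqNgt; apply/negP => hlt.
  have : lowz f n'.+1 by apply/(mindeg_geP f hd).
  move=> /(_ (Ordinal hd)) /= => /(_ (ltnSn _)) h.
  by have := hne (Ordinal hd) erefl; rewrite h eqxx.
Qed.

Lemma mindeg0P f : mindeg f = 0%N <-> f ord0 != 0.
Proof.
rewrite mindeg_char //; split.
- by move=> [_ h]; apply: h.
- move=> h; split; first by move=> m.
  by move=> m hm; have -> : m = ord0 by apply/val_inj.
Qed.
End Mindeg.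

Lemma inordK' (m : nat) : (m < d.+1)%N -> ((inord m : 'I_d.+1) : nat) = m.
Proof. exact: inordK. Qed.

Lemma actE (xi : Gd) (x : Vd) (m : 'I_d.+1) :
  act xi x m = \sum_(b < d.+1 | (b <= m)%N) xi (inord (m - b)) *m x b.
Proof.
rewrite /act ffunE.
under eq_bigr do rewrite big_mkcond.
rewrite exchange_big /= [RHS]big_mkcond; apply: eq_bigr => b _.
case: (leqP b m) => hb.
- rewrite -big_mkcond (big_pred1 (inord (m - b))) // => a /=.
  rewrite -val_eqE /= inordK; last by have := ltn_ord m; lia.
  by apply/idP/idP => /eqP H; apply/eqP; lia.
- by rewrite big1 // => a _; case: ifP => // /eqP; lia.
Qed.

Lemma fadd (I : finType) (V : nmodType) (f g : {ffun I -> V}) i : (f + g) i = f i + g i.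
Proof. by rewrite ffunE. Qed.
Lemma fscale (I : finType) (V : lmodType C) a (f : {ffun I -> V}) i : (a *: f) i = a *: f i.
Proof. by rewrite ffunE. Qed.
Lemma fzero (I : finType) (V : nmodType) i : (0 : {ffun I -> V}) i = 0.
Proof. by rewrite ffunE. Qed.
Lemma fopp (I : finType) (V : zmodType) (f : {ffun I -> V}) i : (- f) i = - f i.
Proof. by rewrite ffunE. Qed.

Lemma act_linear (x : Vd) : linear (fun xi : Gd => act xi x).
Proof.
move=> a xi eta; apply/ffunP => m; rewrite fadd fscale !actE scaler_sumr -big_split /=.
by apply: eq_bigr => b _; rewrite fadd fscale mulmxDl scalemxAl.
Qed.

Lemma act_add (x : Vd) xi eta : act (xi + eta) x = act xi x + act eta x.
Proof. by have := act_linear x 1 xi eta; rewrite /= !scale1r => ->. Qed.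
Lemma act0 (x : Vd) : act 0 x = 0.
Proof. by apply/ffunP => m; rewrite fzero actE big1 // => b _; rewrite fzero mul0mx. Qed.
Lemma act_scale (x : Vd) a xi : act (a *: xi) x = a *: act xi x.
Proof. by have := act_linear x a xi 0; rewrite /= !addr0 act0 addr0. Qed.
Lemma act_sum (x : Vd) I (r : seq I) (P : pred I) (F : I -> Gd) :
  act (\sum_(i <- r | P i) F i) x = \sum_(i <- r | P i) act (F i) x.
Proof. by apply: (big_morph (fun xi => act xi x)) => [xi eta|]; [exact: act_add | exact: act0]. Qed.

Lemma zshE k (xi : Gd) (m : 'I_d.+1) : zsh k xi m = if (k <= m)%N then xi (inord (m - k)) else 0.
Proof. by rewrite ffunE. Qed.

Lemma act_zsh k (xi : Gd) (x : Vd) (m : 'I_d.+1) :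
  act (zsh k xi) x m = if (k <= m)%N then act xi x (inord (m - k)) else 0.
Proof.
have hm := ltn_ord m.
rewrite actE; case: ifP => hk.
- rewrite actE inordK; last lia.
  rewrite big_mkcond [RHS]big_mkcond; apply: eq_bigr => b _.
  rewrite zshE inordK; last lia.
  case: (leqP b (m - k)) => hb.
  + rewrite ifT; last lia. rewrite ifT; last lia.
    by congr (xi _ *m _); apply/val_inj; rewrite /= !inordK; lia.
    case: ifP => // h1; rewrite ifF ?mul0mx //; apply/negP => h; lia.
- rewrite big1 // => b hb; rewrite zshE inordK; last lia.
  by case: ifP => h; [lia | rewrite mul0mx].
Qed.

Definition cst (M : 'M[C]_2) : Gd := [ffun a : 'I_d.+1 => if (a == 0 :> nat) then M else 0].

Lemma act_cst M (x : Vd) m : act (cst M) x m = M *m x m.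
Proof.
rewrite actE (bigD1 m) //= big1 ?addr0.
- by rewrite ffunE inordK subnn //; have := ltn_ord m; lia.
- move=> b /andP [hb nb]; rewrite ffunE inordK; last by have := ltn_ord m; lia.
  case: ifP => h; last by rewrite mul0mx.
  by case/eqP: nb; apply/val_inj => /=; lia.
Qed.

Lemma act_lowz (x : Vd) n eta : lowz x n -> lowz (act eta x) n.
Proof.
move=> hx m hm; rewrite actE big1 // => b hb; rewrite hx ?mulmx0 //; lia.
Qed.

Lemma act_at (x : Vd) n K eta : lowz x n -> lowz eta K -> (n + K <= d)%N ->
  act eta x (inord (n + K)) = eta (inord K) *m x (inord n).
Proof.
move=> hx he hd; rewrite actE (bigD1 (inord n)) /=; last by rewrite !inordK; lia.
rewrite big1 ?addr0.
- by congr (eta _ *m _); apply/val_inj; rewrite /= !inordK; lia.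
- move=> b /andP [hb nb]; rewrite inordK in hb; last lia.
  have nb' : (b : nat) != n by apply: contra nb => /eqP h; apply/eqP/val_inj; rewrite /= inordK; lia.
  case: (ltnP b n) => h; first by rewrite hx ?mulmx0.
  have h2 : (n < b)%N by rewrite ltn_neqAle eq_sym nb' h.
  rewrite he ?mul0mx // !inordK; lia.
Qed.

Lemma act_high (x : Vd) n j theta : lowz x n -> lowz theta j -> (d.+1 <= n + j)%N -> act theta x = 0.
Proof.
move=> hx ht hd; apply/ffunP => m; rewrite fzero actE big1 // => b hb.
case: (ltnP b n) => h; first by rewrite hx ?mulmx0.
have := ltn_ord m; move=> hm.
rewrite ht ?mul0mx // inordK; lia.
Qed.

Lemma in_gdP (xi : Gd) : in_gd xi <-> forall m, \tr (xi m) = 0.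
Proof. by split => [/forallP h m|h]; [exact/eqP/h | apply/forallP => m; apply/eqP]. Qed.

Lemma in_gd0 : in_gd (0 : Gd).
Proof. by apply/in_gdP => m; rewrite fzero mxtrace0. Qed.
Lemma in_gdD (xi eta : Gd) : in_gd xi -> in_gd eta -> in_gd (xi + eta).
Proof. by move=> /in_gdP h1 /in_gdP h2; apply/in_gdP => m; rewrite fadd mxtraceD h1 h2 addr0. Qed.
Lemma in_gdZ a (xi : Gd) : in_gd xi -> in_gd (a *: xi).
Proof. by move=> /in_gdP h1; apply/in_gdP => m; rewrite fscale mxtraceZ h1 mulr0. Qed.
Lemma in_gdN (xi : Gd) : in_gd xi -> in_gd (- xi).
Proof. by move=> h; rewrite -scaleN1r; apply: in_gdZ. Qed.
Lemma in_gd_sum I (r : seq I) (P : pred I) (F : I -> Gd) :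
  (forall i, P i -> in_gd (F i)) -> in_gd (\sum_(i <- r | P i) F i).
Proof. by move=> h; apply: (big_ind (@in_gd C d)) => //; [exact: in_gd0 | exact: in_gdD]. Qed.
Lemma in_gd_zsh k (xi : Gd) : in_gd xi -> in_gd (zsh k xi).
Proof. by move=> /in_gdP h; apply/in_gdP => m; rewrite zshE; case: ifP => _; rewrite ?h ?mxtrace0. Qed.
Lemma in_gd_cst M : \tr M = 0 -> in_gd (cst M).
Proof. by move=> h; apply/in_gdP => m; rewrite ffunE; case: ifP => _; rewrite ?h ?mxtrace0. Qed.

Lemma lowz_zsh k (xi : Gd) : lowz (zsh k xi) k.
Proof. by move=> m hm; rewrite zshE ifF //; apply/negP => h; lia. Qed.

Lemma lowz_mindeg (V : nmodType) (f : {ffun 'I_d.+1 -> V}) : lowz f (mindeg f).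
Proof. exact/(mindeg_geP f (mindeg_le f)). Qed.

Lemma inord_val (m : 'I_d.+1) : inord m = m.
Proof. by apply/val_inj; rewrite /= inordK. Qed.

Lemma exists_xi (x : Vd) : exists xi : Gd, in_gd xi /\ act xi x = 0 /\ mindeg xi = 0%N.
Proof.
set n := mindeg x; have hx : lowz x n := @lowz_mindeg _ x.
case: (leqP n d) => hn; last first.
- have [e1 e2 e3 e4] := mk2E (1 : C) 0 0 (-1).
  exists (cst (mk2 1 0 0 (-1))); split; [|split].
  + by apply: in_gd_cst; rewrite tr2E e1 e4 subrr.
  + by apply: (act_high (n := n) (j := 0)) => //; lia.
  + apply/mindeg0P; rewrite ffunE /=; apply/eqP => /matrixP /(_ 0 0).
    by rewrite e1 mxE => /eqP; rewrite oner_eq0.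
set v := x (inord n).
have hv : v != 0 by apply: mindeg_att.
have [N1 N2 N3] := Nv_props hv.
set J := (d.+1 - n)%N.
have key : forall t, (t.+1 <= J)%N -> exists xi : Gd,
    [/\ in_gd xi, xi ord0 != 0 & lowz (act xi x) (n + t.+1)].
  elim=> [|t IH] ht.
  - exists (cst (Nv v)); split; first exact: in_gd_cst.
    + by rewrite ffunE.
    + move=> m hm; rewrite act_cst.
      case: (ltnP m n) => h; first by rewrite hx ?mulmx0.
      have -> : m = inord n by apply/val_inj; rewrite /= inordK; lia.
      exact: N2.
  - have [xi [g1 g2 g3]] := IH (ltnW ht).
    set K := t.+1.
    set r := act xi x (inord (n + K)).
    have [M [M1 M2]] := sl2_surj (- r) hv.
    exists (xi + zsh K (cst M)); split.
    + by apply: in_gdD => //; apply/in_gd_zsh/in_gd_cst.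
    + by rewrite fadd zshE /= addr0.
    + move=> m hm; rewrite act_add fadd act_zsh.
      case: (ltnP m (n + K)) => h.
      * rewrite g3 // add0r; case: ifP => // hk.
        by rewrite act_cst hx ?mulmx0 // inordK; lia.
      * have em : m = inord (n + K) by apply/val_inj; rewrite /= inordK; lia.
        rewrite ifT; last by lia.
        rewrite act_cst em -/r.
        have e : inord (n + K - K) = inord n :> 'I_d.+1.
          by congr inord; lia.
        rewrite inordK ?e ?M2 ?addrN //; lia.
have hJ : (0 < J)%N by rewrite /J; lia.
have [xi [g1 g2 g3]] := key J.-1 ltac:(lia).
exists xi; split => //; split; last exact/mindeg0P.
apply/ffunP => m; rewrite fzero; apply: g3; have := ltn_ord m; lia.
Qed.

Lemma sum_delta (J : nat) (K : 'I_J) (l : C) (F : 'I_J -> Gd) :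
  \sum_(k < J) (if (k == K :> nat) then l else 0) *: F k = l *: F K.
Proof.
rewrite (bigD1 K) //= eqxx big1 ?addr0 // => k nk.
by rewrite ifF ?scale0r //; apply/negP => /eqP h; case/eqP: nk; apply/val_inj.
Qed.

Section Stab.
Variable x : Vd.
Variable xi : Gd.
Hypothesis xi_gd : in_gd xi.
Hypothesis xi_x : act xi x = 0.
Hypothesis xi_0 : xi ord0 != 0.
Let n := mindeg x.
Let J := (d.+1 - n)%N.
Let hx : lowz x n := @lowz_mindeg _ x.

Lemma act_zsh0 k : act (zsh k xi) x = 0.
Proof. by apply/ffunP => m; rewrite act_zsh xi_x !fzero; case: ifP. Qed.

Lemma act_comb (c : 'I_J -> C) : act (\sum_(k < J) c k *: zsh k xi) x = 0.
Proof. by rewrite act_sum big1 // => k _; rewrite act_scale act_zsh0 scaler0. Qed.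

Lemma stab_decomp (eta : Gd) : in_gd eta -> act eta x = 0 ->
  exists (c : 'I_J -> C) (theta : Gd),
    [/\ in_gd theta, lowz theta J & eta = \sum_(k < J) c k *: zsh k xi + theta].
Proof.
suff : forall t eta, (t <= J)%N -> in_gd eta -> act eta x = 0 -> lowz eta (J - t) ->
  exists (c : 'I_J -> C) (theta : Gd),
    [/\ in_gd theta, lowz theta J & eta = \sum_(k < J) c k *: zsh k xi + theta].
  move=> H ge ae; apply: (H J) => //; rewrite subnn; by move=> m.
elim=> [|t IH] {}eta ht ge ae le.
- exists (fun _ => 0), eta; split => //; first by rewrite subn0 in le.
  by rewrite big1 ?add0r // => k _; rewrite scale0r.
- set K := (J - t.+1)%N.
  have hKJ : (K < J)%N by rewrite /K; lia.
  have hnd : (n <= d)%N by rewrite /J in hKJ; lia.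
  have hv : x (inord n) != 0 by apply: mindeg_att.
  have eK : eta (inord K) *m x (inord n) = 0.
    by rewrite -act_at // ?ae ?fzero //; rewrite /K /J; lia.
  have e0 : xi (inord 0) *m x (inord n) = 0.
    by rewrite -(act_at (K := 0)) ?addn0 ?xi_x ?fzero //; move=> m.
  have [l1 hl1] := stab_line hv (proj1 (in_gdP eta) ge _) eK.
  have [l2 hl2] := stab_line hv (proj1 (in_gdP xi) xi_gd _) e0.
  have l2nz : l2 != 0.
    apply: contra xi_0 => /eqP l20; move: hl2; rewrite l20 scale0r.
    have -> : inord 0 = ord0 :> 'I_d.+1 by apply/val_inj; rewrite /= inordK.
    by move=> ->.
  set lam := l1 / l2.
  have elam : eta (inord K) = lam *: xi (inord 0).
    by rewrite hl1 hl2 scalerA /lam mulfVK.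
  set eta' := eta + (- lam) *: zsh K xi.
  have [c [theta [t1 t2 t3]]] : exists (c : 'I_J -> C) (theta : Gd),
    [/\ in_gd theta, lowz theta J & eta' = \sum_(k < J) c k *: zsh k xi + theta].
    apply: IH; first lia.
    + by apply: in_gdD => //; apply/in_gdZ/in_gd_zsh.
    + by rewrite act_add act_scale act_zsh0 scaler0 addr0.
    + move=> m hm; rewrite fadd fscale zshE.
      case: (ltnP m K) => h.
      * by rewrite le ?scaler0 ?addr0 //; rewrite /K in h; lia.
      * have em : m = inord K by apply/val_inj; rewrite /= inordK; rewrite /K in h *; lia.
        rewrite em inordK ?subnn ?elam; last by have := ltn_ord m; rewrite /K in h *; lia.
        by rewrite scaleNr addrN.
  exists (fun k => c k + (if (k == Ordinal hKJ :> nat) then lam else 0)), theta; split => //.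
  have -> : eta = eta' + lam *: zsh K xi by rewrite /eta' -addrA scaleNr addNr addr0.
  have -> : \sum_(k < J) (c k + (if (k == Ordinal hKJ :> nat) then lam else 0)) *: zsh k xi
      = \sum_(k < J) c k *: zsh k xi + lam *: zsh K xi.
    rewrite -(sum_delta (Ordinal hKJ) lam (fun k : 'I_J => zsh k xi)) -big_split.
    by apply: eq_bigr => k _; rewrite scalerDl.
  by rewrite t3 -!addrA [theta + _]addrC.
Qed.

Lemma stab_indep (c : 'I_J -> C) (theta : Gd) : lowz theta J ->
  \sum_(k < J) c k *: zsh k xi + theta = 0 -> (forall k, c k = 0) /\ theta = 0.
Proof.
move=> ht E.
have H : forall t (k : 'I_J), (k < t)%N -> c k = 0.
  elim=> [|t IH] k hk; first by [].
  case: (ltnP k t) => h; first by apply: IH.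
  have ek : (k : nat) = t by lia.
  have hkd : (k < d.+1)%N by have := ltn_ord k; rewrite /J; lia.
  have := congr1 (fun f : Gd => f (inord k)) E.
  rewrite /= fadd sum_ffunE fzero (ht (inord k)); last by rewrite inordK.
  rewrite addr0 (bigD1 k) //= big1 ?addr0.
  - rewrite fscale zshE inordK // leqnn subnn => /eqP; rewrite scaler_eq0.
    case/orP => /eqP // h0.
    have e0 : inord 0 = ord0 :> 'I_d.+1 by apply/val_inj; rewrite /= inordK.
    by move: xi_0; rewrite -e0 h0 eqxx.
  - move=> k' nk'; rewrite fscale zshE inordK //.
    case: ifP => h'; last by rewrite scaler0.
    have : (k' : nat) != k by apply: contra nk' => /eqP e; apply/eqP/val_inj.
    move=> nk''; rewrite IH ?scale0r //.
    have : (k' < k)%N by rewrite ltn_neqAle nk'' h'.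
    lia.
have c0 : forall k, c k = 0 by move=> k; apply: (H J).
split => //; move: E; rewrite big1 ?add0r // => k _; by rewrite c0 scale0r.
Qed.

Lemma hJ : (d.+1 <= n + J)%N.
Proof. have := mindeg_le x; rewrite /J /n; lia. Qed.

Lemma act_comb_gen (r : seq nat) (c : nat -> C) : act (\sum_(k <- r) c k *: zsh k xi) x = 0.
Proof. by rewrite act_sum big1 // => k _; rewrite act_scale act_zsh0 scaler0. Qed.

Lemma stab_B2 (eta : Gd) : in_gd eta && (act eta x == 0) <->
  exists (c : 'I_J -> C) (theta : Gd),
    in_gd theta /\ (J <= mindeg theta)%N /\ eta = \sum_(k < J) c k *: zsh k xi + theta.
Proof.
split.
- move=> /andP [ge /eqP ae]; have [c [theta [t1 t2 t3]]] := stab_decomp ge ae.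
  exists c, theta; split => //; split => //.
  apply/(mindeg_geP theta) => //; rewrite /J; lia.
- move=> [c [theta [t1 [t2 ->]]]].
  have lt : lowz theta J by apply/(mindeg_geP theta) => //; rewrite /J; lia.
  apply/andP; split.
  + by apply: in_gdD => //; apply: in_gd_sum => k _; apply/in_gdZ/in_gd_zsh.
  + by rewrite act_add act_comb (act_high hx lt hJ) addr0.
Qed.

Lemma stab_B1 (eta : Gd) : in_gd eta && (act eta x == 0) <->
  exists (c : 'I_d.+1 -> C) (theta : Gd),
    in_gd theta /\ eta = \sum_(k < d.+1) c k *: zsh k xi + zsh J theta.
Proof.
split.
- move=> /andP [ge /eqP ae]; have [c [theta [t1 t2 t3]]] := stab_decomp ge ae.
  pose copt (k : nat) : C := if (insub k : option 'I_J) is Some k' then c k' else 0.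
  pose th1 : Gd := [ffun m : 'I_d.+1 => if (m + J < d.+1)%N then theta (inord (m + J)) else 0].
  exists (fun k : 'I_d.+1 => copt k), th1; split.
  + apply/in_gdP => m; rewrite ffunE; case: ifP => _; last by rewrite mxtrace0.
    exact: (proj1 (in_gdP theta) t1).
  + rewrite t3; congr (_ + _).
    * have hJd : (J <= d.+1)%N by rewrite /J; lia.
      rewrite (eq_bigr (fun k : 'I_J => copt k *: zsh k xi)); last first.
        by move=> k _; rewrite /copt valK.
      rewrite (big_ord_widen _ (fun k => copt k *: zsh k xi) hJd) /=.
      rewrite [LHS]big_mkcond; apply: eq_bigr => k _.
      case: ifP => // h; rewrite /copt insubF ?scale0r //; exact: negbT.
    * apply/ffunP => m; rewrite zshE; case: ifP => h.
      - rewrite ffunE inordK; last by have := ltn_ord m; lia.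
        rewrite ifT; last by have := ltn_ord m; lia.
        by congr (theta _); apply/val_inj; rewrite /= inordK; have := ltn_ord m; lia.
      - by rewrite t2 //; lia.
- move=> [c [theta [t1 ->]]]; apply/andP; split.
  + by apply: in_gdD; [apply: in_gd_sum => k _; apply/in_gdZ/in_gd_zsh | apply: in_gd_zsh].
  + rewrite act_add (act_high hx (@lowz_zsh J theta) hJ) addr0.
    by rewrite act_sum big1 // => k _; rewrite act_scale act_zsh0 scaler0.
Qed.
End Stab.

Lemma trmap_linear : linear (@trmap C d).
Proof.
move=> a u v; apply/ffunP => m; rewrite /trmap ffunE fadd fscale fadd fscale !ffunE.
by rewrite mxtraceD mxtraceZ.
Qed.

Lemma mem_gd (eta : Gd) : (eta \in gd_space C d) = in_gd eta.
Proof.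
rewrite /gd_space memv_ker linfunE'; last exact: trmap_linear.
apply/eqP/idP => h.
- apply/in_gdP => m; move/ffunP: h => /(_ m); by rewrite /trmap ffunE fzero.
- by apply/ffunP => m; rewrite /trmap ffunE fzero; apply: (proj1 (in_gdP eta) h).
Qed.

Definition shift_in (j : nat) (u : {ffun 'I_(d.+1 - j) -> 'cV[C]_2}) : Vd :=
  [ffun m : 'I_d.+1 => if (j <= m)%N then
     (if (insub (m - j)%N : option 'I_(d.+1 - j)) is Some i then u i else 0) else 0].

Lemma shift_linear j : linear (@shift_in j).
Proof.
move=> a u v; apply/ffunP => m; rewrite fadd fscale /shift_in !ffunE.
case: ifP => _; last by rewrite scaler0 addr0.
by case: insubP => [i _ _|_]; rewrite ?fadd ?fscale // scaler0 addr0.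
Qed.

Definition Wsp (j : nat) : {vspace Vd} := (linfun (@shift_in j) @: fullv)%VS.

Lemma memW j (w : Vd) : (j <= d.+1)%N -> (w \in Wsp j) <-> lowz w j.
Proof.
move=> hj; split.
- case/memv_imgP => u _ ->; rewrite linfunE'; last exact: shift_linear.
  by move=> m hm; rewrite ffunE ifF //; apply/negP => h; lia.
- move=> hl.
  pose u : {ffun 'I_(d.+1 - j) -> 'cV[C]_2} := [ffun i : 'I_(d.+1 - j) => w (inord (i + j))].
  have -> : w = linfun (@shift_in j) u.
    rewrite linfunE'; last exact: shift_linear.
    apply/ffunP => m; rewrite ffunE; case: ifP => h; last by rewrite hl //; lia.
    case: insubP => [i _ hi|]; last by have := ltn_ord m; move=> hm /negP; lia.
    rewrite ffunE hi; congr (w _); apply/val_inj; rewrite /= inordK //; have := ltn_ord m; lia.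
  by apply: memv_img; apply: memvf.
Qed.

Lemma dimW j : (j <= d.+1)%N -> \dim (Wsp j) = (2 * (d.+1 - j))%N.
Proof.
move=> hj; rewrite /Wsp limg_dim_eq.
- by rewrite dimvf /dim /= card_ord mulnC.
- rewrite capfv; apply/eqP/lker0P => u v.
  rewrite !linfunE'; try exact: shift_linear.
  move=> E; apply/ffunP => i.
  have hi : (i + j < d.+1)%N by have := ltn_ord i; lia.
  have := congr1 (fun f : Vd => f (Ordinal hi)) E; rewrite !ffunE /= leq_addl addnK.
  case: insubP => [i' _ hi'|]; last by rewrite ltn_ord.
  by have -> : i' = i by apply/val_inj.
Qed.

Lemma mem_orbit (y : Vd) (eta : Gd) : in_gd eta -> act eta y \in orbit_space y.
Proof.
move=> h; rewrite /orbit_space -(linfunE' (act_linear y)).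
by apply: memv_img; rewrite mem_gd.
Qed.

Lemma orbit_eq (y : Vd) : orbit_space y = Wsp (mindeg y).
Proof.
set n := mindeg y; have hy : lowz y n := @lowz_mindeg _ y.
have hn : (n <= d.+1)%N := mindeg_le y.
apply/vspaceP => w; apply/idP/idP.
- case/memv_imgP => eta; rewrite mem_gd => ge ->.
  rewrite linfunE'; last exact: act_linear.
  by apply/(memW _ hn); apply: act_lowz.
- move/(memW _ hn) => hw.
  suff H : forall t (u : Vd), (n + t <= d.+1)%N -> lowz u (d.+1 - t) -> u \in orbit_space y.
    by apply: (H (d.+1 - n)%N); [lia | rewrite subKn].
  clear hw; elim=> [|t IH] u ht hl.
  + have -> : u = 0 by apply/ffunP => m; rewrite fzero hl // subn0.
    exact: mem0v.
  + set m0 := (d - t)%N.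
    have hm0 : (m0 < d.+1)%N by rewrite /m0; lia.
    have hv : y (inord n) != 0 by apply: mindeg_att; lia.
    have [M [M1 M2]] := sl2_surj (u (inord m0)) hv.
    set eta := zsh (m0 - n) (cst M).
    have ge : in_gd eta by apply/in_gd_zsh/in_gd_cst.
    have -> : u = (u - act eta y) + act eta y by rewrite subrK.
    apply: memvD; last exact: mem_orbit.
    apply: IH; first lia.
    move=> m hm; rewrite fadd fopp act_zsh.
    case: (ltnP m m0) => h.
    * rewrite hl; last lia.
      case: ifP => h2; last by rewrite oppr0 addr0.
      by rewrite act_cst hy ?mulmx0 ?oppr0 ?addr0 // inordK; lia.
    * have em : m = inord m0 by apply/val_inj; rewrite /= inordK; lia.
      rewrite ifT; last by rewrite em inordK; lia.
      rewrite act_cst em.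
      have -> : inord ((inord m0 : 'I_d.+1) - (m0 - n))%N = inord n :> 'I_d.+1.
        by apply/val_inj; rewrite /= !inordK //; lia.
      by rewrite M2 subrr.
Qed.

Lemma orbit_dimE (y : Vd) : orbit_dim y = (2 * (d.+1 - mindeg y))%N.
Proof. by rewrite /orbit_dim orbit_eq dimW // mindeg_le. Qed.
End T.

Section Artin.
Variable C : numClosedFieldType.
Variable N : nat.

Definition mono (m : 'X_{1..N}) (v : 'I_N -> C) : C := \prod_i v i ^+ m i.

Lemma mono_mul m v w : mono m (fun i => v i * w i) = mono m v * mono m w.
Proof. by rewrite /mono -big_split; apply: eq_bigr => i _; rewrite exprMn. Qed.

Lemma mono1 m : mono m (fun _ => 1) = 1.
Proof. by rewrite /mono big1 // => i _; rewrite expr1n. Qed.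

Lemma mono_pt m i : mono m (fun k => if k == i then 2 else 1) = 2 ^+ m i.
Proof.
rewrite /mono (bigD1 i) //= eqxx big1 ?mulr1 // => k nk.
by rewrite ifF ?expr1n //; exact: negbTE.
Qed.

Lemma artin (s : seq 'X_{1..N}) : uniq s -> forall c : 'X_{1..N} -> C,
  (forall v, \sum_(m <- s) c m * mono m v = 0) -> forall m, m \in s -> c m = 0.
Proof.
elim: s => [|m0 s IH] //= /andP [m0s us] c H.
have Hs : forall m, m \in s -> c m = 0.
  move=> m ms.
  have nm : m != m0 by apply: contraNneq m0s => <-.
  case: (pickP (fun i => m i != m0 i)) => [i hi | hall]; last first.
    by case/eqP: nm; apply/mnmP => i; have := hall i => /= /negbFE /eqP.
  pose w := fun k : 'I_N => if k == i then (2 : C) else 1.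
  have Hc' : forall v, \sum_(m' <- s) (c m' * (mono m' w - mono m0 w)) * mono m' v = 0.
    move=> v; have h1 := H (fun k => w k * v k); have h2 := H v.
    rewrite big_cons in h1; rewrite big_cons in h2.
    have e : \sum_(m' <- s) (c m' * (mono m' w - mono m0 w)) * mono m' v =
      \sum_(m' <- s) c m' * mono m' (fun k => w k * v k) - mono m0 w * \sum_(m' <- s) c m' * mono m' v.
      rewrite mulr_sumr -sumrB; apply: eq_bigr => m' _; rewrite mono_mul; ring.
    have s1 : \sum_(m' <- s) c m' * mono m' (fun k => w k * v k) = - (c m0 * mono m0 (fun k => w k * v k)).
      by apply/eqP; rewrite -addr_eq0 addrC h1.
    have s2 : \sum_(m' <- s) c m' * mono m' v = - (c m0 * mono m0 v).
      by apply/eqP; rewrite -addr_eq0 addrC h2.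
    rewrite e s1 s2 mono_mul; ring.
  have := IH us _ Hc' m ms; rewrite !mono_pt => /eqP; rewrite mulf_eq0.
  have nz : (2 : C) ^+ m i - 2 ^+ m0 i != 0.
    by rewrite subr_eq0 -!natrX eqr_nat eqn_exp2l.
  by rewrite (negPf nz) orbF => /eqP.
move=> m; rewrite in_cons => /orP [/eqP ->|]; last exact: Hs.
have := H (fun _ => 1); rewrite big_cons mono1 mulr1 big_seq big1 ?addr0 //.
by move=> m' hm'; rewrite Hs // mul0r.
Qed.

Lemma poly_zero (p : {mpoly C[N]}) : (forall v, p.@[v] = 0) -> p = 0.
Proof.
move=> H; apply/mpolyP => m; rewrite mcoeff0.
case: (boolP (m \in msupp p)) => hm.
- have Hc : forall v, \sum_(m0 <- msupp p) p@_m0 * mono m0 v = 0.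
    by move=> v; rewrite -[RHS](H v) mevalE.
  exact: (artin (msupp_uniq p) Hc hm).
- by apply/eqP; move: hm; rewrite mcoeff_msupp negbK.
Qed.
End Artin.

Section Dims.
Variable C : numClosedFieldType.
Variable d : nat.
Local Notation Vd := (Vd C d).
Local Notation N := (2 * d.+1)%N.

Lemma card_ge (a : nat) : #|[set i : 'I_N | (a <= i)%N]| = (N - a)%N.
Proof.
rewrite -sum1_card.
have -> : (\sum_(i in [set i : 'I_N | (a <= i)%N]) 1 = \sum_(a <= i < N) 1)%N.
  by rewrite big_geq_mkord; apply: eq_bigl => i; rewrite inE.
by rewrite sum_nat_const_nat muln1.
Qed.

Lemma meval_supp (p : {mpoly C[N]}) (J : {set 'I_N}) (v v' : 'I_N -> C) :
  (forall m, m \in msupp p -> forall i, i \notin J -> m i = 0%N) ->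
  (forall i, i \in J -> v i = v' i) -> p.@[v] = p.@[v'].
Proof.
move=> hs hv; rewrite !mevalE; apply: eq_big_seq => m hm; congr (_ * _).
apply: eq_bigr => i _; case: (boolP (i \in J)) => hi; first by rewrite hv.
by rewrite hs // !expr0.
Qed.

Lemma stratumE n' (y : Vd) : (n' <= d.+1)%N -> Vstratum (2 * (d.+1 - n')) y <-> mindeg y = n'.
Proof.
move=> hn; rewrite /Vstratum orbit_dimE; have := mindeg_le y.
by split => [/eqP|->//]; lia.
Qed.

Lemma not_in_J (S : pred Vd) (J : {set 'I_N}) i :
  alg_indep_on S J -> (forall y, S y -> coordV y i = 0) -> i \notin J.
Proof.
move=> hJ hS; apply/negP => iJ.
have : 'X_i = 0 :> {mpoly C[N]}.
  apply: hJ.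
  - move=> m /mem_msuppXP <- k kJ; rewrite mnm1E; case: eqP => // e.
    by move: kJ; rewrite -e iJ.
  - by move=> y Sy; rewrite mevalXU hS.
move/(congr1 (mcoeff U_(i))); rewrite mcoeffXU eqxx mcoeff0 => /eqP.
by rewrite oner_eq0.
Qed.

Lemma empty_not_indep (S : pred Vd) (J : {set 'I_N}) : (forall y, ~ S y) -> ~ alg_indep_on S J.
Proof.
move=> hS hJ.
have : (1 : {mpoly C[N]}) = 0.
  apply: hJ; last by move=> y /hS.
  move=> m; rewrite -mpolyX0 => /mem_msuppXP <- i _; by rewrite mnm0E.
by move/eqP; rewrite oner_eq0.
Qed.

Lemma idx_lt (m : 'I_d.+1) (r : 'I_2) : (2 * m + r < N)%N.
Proof. by have := ltn_ord m; have := ltn_ord r; lia. Qed.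
Definition idx (m : 'I_d.+1) (r : 'I_2) : 'I_N := Ordinal (idx_lt m r).
Definition ymk n' (v : 'I_N -> C) : Vd :=
  [ffun m : 'I_d.+1 => if (n' <= m)%N then \col_(r < 2) v (idx m r) else 0].

Lemma coord_ymk n' v (i : 'I_N) : (2 * n' <= i)%N -> coordV (ymk n' v) i = v i.
Proof.
move=> hi; have := ltn_ord i => hiN.
rewrite /coordV ffunE inordK; last lia.
rewrite ifT; last lia.
rewrite mxE; congr (v _); apply/val_inj; rewrite /= !inordK; lia.
Qed.

Lemma ymk_mindeg n' v : (n' <= d)%N -> v (idx (inord n') 0) != 0 -> mindeg (ymk n' v) = n'.
Proof.
move=> hn hv; apply/mindeg_char; first lia.
split.
- by move=> m hm; rewrite ffunE ifF //; apply/negP => h; lia.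
- move=> m hm; rewrite ffunE ifT; last lia.
  apply: contra hv => /eqP /matrixP /(_ 0 0); rewrite !mxE => <-.
  by have -> : m = inord n' by apply/val_inj; rewrite /= inordK; lia.
Qed.

Lemma coordV_low (y : Vd) n' (i : 'I_N) : lowz y n' -> (i < 2 * n')%N -> coordV y i = 0.
Proof. by move=> hy hi; rewrite /coordV hy ?mxE // inordK; have := ltn_ord i; lia. Qed.

Lemma mindeg_zero : mindeg (0 : Vd) = d.+1.
Proof.
apply/mindeg_char => //; split; first by move=> m _; rewrite fzero.
by move=> m hm; have := ltn_ord m; lia.
Qed.

Lemma strat_dim n' : (n' <= d.+1)%N -> @has_dim C d (@Vstratum C d (2 * (d.+1 - n'))%N) (2 * (d.+1 - n'))%N.
Proof.
move=> hn; set S := Vstratum _.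
have hS : forall y, S y <-> mindeg y = n' := fun y => stratumE y hn.
set J0 := [set i : 'I_N | (2 * n' <= i)%N].
have cJ0 : #|J0| = (2 * (d.+1 - n'))%N by rewrite card_ge; lia.
split.
- exists J0; split => //.
  move=> p hp hv.
  have agree : forall v v', (forall i, i \in J0 -> v i = v' i) -> p.@[v] = p.@[v'].
    by move=> v v'; apply: meval_supp.
  case: (ltnP n' d.+1) => hnd.
  + set a := idx (inord n') 0.
    have : p * 'X_a = 0.
      apply: poly_zero => v; rewrite mevalM mevalXU.
      case: (eqVneq (v a) 0) => [->|nz]; first by rewrite mulr0.
      rewrite (agree v (coordV (ymk n' v))); first by rewrite hv ?mul0r //; apply/hS; apply: ymk_mindeg.
      by move=> i; rewrite inE => hi; rewrite coord_ymk.
    move/eqP; rewrite mulf_eq0 => /orP [/eqP //|].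
    move/eqP/(congr1 (mcoeff U_(a))); rewrite mcoeffXU eqxx mcoeff0 => /eqP.
    by rewrite oner_eq0.
  + apply: poly_zero => v; rewrite (agree v (coordV 0)).
    * by apply: hv; apply/hS; rewrite mindeg_zero; lia.
    * by move=> i; rewrite inE => hi; have := ltn_ord i; lia.
- move=> J hJ; rewrite -cJ0; apply: subset_leq_card; apply/subsetP => i iJ.
  rewrite inE leqNgt; apply/negP => hi.
  move: iJ; apply/negP; apply: (not_in_J hJ) => y /hS hy.
  by apply: coordV_low hi; rewrite -hy; apply: lowz_mindeg.
Qed.
End Dims.

Theorem proposition3p3 (C : numClosedFieldType) (d : nat) :
  forall x : Vd C d,
  let n := mindeg x in
  (* (1) *)
  (exists xi : Gd C d, in_gd xi /\ act xi x = 0 /\ mindeg xi = 0%N) /\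
  (* (2) *)
  (forall xi : Gd C d, in_gd xi -> act xi x = 0 -> mindeg xi = 0%N ->
     (forall eta : Gd C d,
        (in_gd eta && (act eta x == 0)) <->
        (exists (c : 'I_d.+1 -> C) (theta : Gd C d),
           in_gd theta /\ eta = \sum_(k < d.+1) c k *: zsh k xi + zsh (d.+1 - n) theta)) /\
     (forall eta : Gd C d,
        (in_gd eta && (act eta x == 0)) <->
        (exists (c : 'I_(d.+1 - n) -> C) (theta : Gd C d),
           in_gd theta /\ (d.+1 - n <= mindeg theta)%N /\
           eta = \sum_(k < d.+1 - n) c k *: zsh k xi + theta)) /\
     (forall (c : 'I_(d.+1 - n) -> C) (theta : Gd C d),
        in_gd theta -> (d.+1 - n <= mindeg theta)%N ->
        \sum_(k < d.+1 - n) c k *: zsh k xi + theta = 0 ->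
        (forall k, c k = 0) /\ theta = 0)) /\
  (* (3) *)
  ((forall n' : nat, (n' <= d.+1)%N ->
      forall y : Vd C d,
        (@Vstratum C d (2 * (d.+1 - n')) y <-> mindeg y = n') /\
        (mindeg y = n' <->
           (forall m : 'I_d.+1, (m < n')%N -> y m = 0) /\
           (forall m : 'I_d.+1, (m : nat) = n' -> y m != 0))) /\
   (forall s : nat, (forall n' : nat, (n' <= d.+1)%N -> s <> (2 * (d.+1 - n'))%N) ->
      forall y : Vd C d, ~ @Vstratum C d s y) /\
   modality_is C d 0 /\
   (forall s : nat, (exists y, @Vstratum C d s y) -> has_dim (@Vstratum C d s) s)).
Proof.
move=> x n; split; first exact: exists_xi.
split.
- move=> xi g1 g2 g3.
  have x0 : xi ord0 != 0 by apply/mindeg0P.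
  split; first by move=> eta; apply: stab_B1.
  split; first by move=> eta; apply: stab_B2.
  move=> c theta t1 t2 E.
  apply: (@stab_indep C d x xi g1 x0 c theta _ E).
  by apply/(mindeg_geP theta) => //; rewrite /n; lia.
- split; [|split; [|split]].
  + move=> n' hn' y; split; first exact: stratumE.
    exact: mindeg_char.
  + move=> s hs y; rewrite /Vstratum orbit_dimE => /eqP hy.
    by apply: (hs (mindeg y) (mindeg_le y)); rewrite hy.
  + split.
    * move=> s k hk.
      case: (classic (exists y, @Vstratum C d s y)) => [[y hy]|hne].
      - move: hy; rewrite /Vstratum orbit_dimE => /eqP hy.
        rewrite -hy in hk *.
        have [_ hmax] := strat_dim C (mindeg_le y).
        have [[J [hJ cJ]] _] := hk.
        by rewrite subr_le0 lez_nat -cJ; apply: hmax.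
      - have [[J [hJ _]] _] := hk.
        exfalso; apply: (empty_not_indep _ hJ) => y hy; apply: hne; by exists y.
    * exists 0%N, 0%N; split; last by rewrite subrr.
      by have := strat_dim C (leqnn d.+1); rewrite subnn muln0.
  + move=> s [y hy].
    have hs : s = (2 * (d.+1 - mindeg y))%N.
      by move: hy; rewrite /Vstratum orbit_dimE => /eqP.
    by rewrite hs; have := strat_dim C (mindeg_le y).
Qed.
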